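(* A maximal product two-action game with $m$ players has exactly $\frac12\bigl(V(m)+!m\bigr)$ Nash equilibria, where $V(m)=\sum_{l=0}^m\binom{m}{l}2^l\cdot!(m-l)$.
   Context: Fix an integer $m\ge 1$ and $\mathcal A=\{1,\dots,m\}$. A two-action game is a finite game in normal form with player set $\mathcal A$ in which each player $i$ has exactly two pure strategies $s^i_0,s^i_1$, together with utility functions $U^i:S\to\mathbb R$, where $S=\prod_{i\in\mathcal A}\{s^i_0,s^i_1\}$. A mixed strategy combination is identified with $\underline\gamma=(\gamma^1,\dots,\gamma^m)\in[0,1]^m$, where $\gamma^i$ is the probability with which player $i$ plays $s^i_1$. The expected utility $V^i$ is the multilinear extension $V^i(\underline\gamma)=\sum_{(j_1,\dots,j_m)\in\{0,1\}^m}\prod_{k=1}^m p_k(j_k)\,U^i(s^1_{j_1},\dots,s^m_{j_m})$ with $p_k(1)=\gamma^k$, $p_k(0)=1-\gamma^k$. Write $\underline\gamma^{-i}=(\gamma^j)_{j\ne i}$ and $\lambda^i(\underline\gamma^{-i}):=V^i(\underline\gamma)|_{\gamma^i=1}-V^i(\underline\gamma)|_{\gamma^i=0}$. A Nash equilibrium is a point $\underline\gamma\in[0,1]^m$ such that for every $i$: $\lambda^i(\underline\gamma^{-i})=0$ if $0<\gamma^i<1$; $\lambda^i(\underline\gamma^{-i})\le 0$ if $\gamma^i=0$; $\lambda^i(\underline\gamma^{-i})\ge 0$ if $\gamma^i=1$. For $\underline\gamma$ put $L(\underline\gamma)=\{i:\gamma^i\in\{0,1\}\}$. A two-action game is a product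 two-action game if there exist $\underline v=(v_1,\dots,v_m)\in\{0,1\}^m$ and numbers $a^i_j\in(0,1)$ for $i,j\in\mathcal A$, $i\ne j$, with $a^{i_1}_j\neq a^{i_2}_j$ whenever $i_1\neq i_2$ and both differ from $j$, such that $\lambda^i(\underline\gamma^{-i})=(-1)^{v_i}\prod_{j\in\mathcal A\setminus\{i\}}(\gamma^j-a^i_j)$ for every $i\in\mathcal A$. For $\pi\in S_m$, $F(\pi)=\{i:\pi(i)=i\}$; $\mathrm{Der}_m=\{\pi\in S_m: F(\pi)=\emptyset\}$; $!n$ is the number of derangements of an $n$-element set ($!0=1$). $EC(\pi):=\{\underline\gamma\in[0,1]^m \mid L(\underline\gamma)=F(\pi),\ \gamma^j=a^{\pi(j)}_j \text{ for all } j\notin F(\pi)\}$. A product two-action game is maximal if for every $\pi\in S_m\setminus\mathrm{Der}_m$ exactly half of the elements of $EC(\pi)$ are Nash equilibria. *)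

(* Defs.v *)
From HB Require Import structures.
From mathcomp Require Import all_boot all_order all_algebra all_fingroup.
From mathcomp Require Import reals.
Set Implicit Arguments. Unset Strict Implicit. Unset Printing Implicit Defensive.
Import Order.TTheory GRing.Theory Num.Theory.
Local Open Scope ring_scope.

Section TwoAction.
Variables (R : realType) (m : nat).

(* A pure profile is s : {ffun 'I_m -> bool}, where
   s i = true means player i plays s^i_1 and false means s^i_0.
   A mixed profile is gamma : {ffun 'I_m -> R} (gamma i = prob. of s^i_1). *)

Definition in01 (g : {ffun 'I_m -> R}) : Prop := forall i, 0 <= g i <= 1.

Definition expU (U : 'I_m -> {ffun 'I_m -> bool} -> R) (i : 'I_m)
    (g : {ffun 'I_m -> R}) : R :=
  \sum_(s : {ffun 'I_m -> bool})
     (\prod_(k : 'I_m) (if s k then g k else 1 - g k)) * U i s.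

Definition setc (g : {ffun 'I_m -> R}) (i : 'I_m) (x : R) : {ffun 'I_m -> R} :=
  [ffun k => if k == i then x else g k].

Definition lam (U : 'I_m -> {ffun 'I_m -> bool} -> R) (i : 'I_m)
    (g : {ffun 'I_m -> R}) : R :=
  expU U i (setc g i 1) - expU U i (setc g i 0).

Definition nash (U : 'I_m -> {ffun 'I_m -> bool} -> R) (g : {ffun 'I_m -> R})
    : Prop :=
  in01 g /\
  forall i : 'I_m,
    [/\ (0 < g i < 1 -> lam U i g = 0),
        (g i = 0 -> lam U i g <= 0) &
        (g i = 1 -> lam U i g >= 0)].

Definition product_game (U : 'I_m -> {ffun 'I_m -> bool} -> R)
    (v : 'I_m -> bool) (a : 'I_m -> 'I_m -> R) : Prop :=
  [/\ (forall i j : 'I_m, i != j -> 0 < a i j < 1),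
      (forall i1 i2 j : 'I_m, i1 != j -> i2 != j -> i1 != i2 -> a i1 j != a i2 j)
    & (forall (i : 'I_m) (g : {ffun 'I_m -> R}), in01 g ->
         lam U i g = (-1) ^+ v i * \prod_(j : 'I_m | j != i) (g j - a i j))].

Definition Lset (g : {ffun 'I_m -> R}) (i : 'I_m) : Prop := g i = 0 \/ g i = 1.

Definition fixedp (p : {perm 'I_m}) (i : 'I_m) : bool := p i == i.

Definition EC (a : 'I_m -> 'I_m -> R) (p : {perm 'I_m}) (g : {ffun 'I_m -> R})
    : Prop :=
  [/\ in01 g,
      (forall i, Lset g i <-> fixedp p i)
    & (forall j, ~~ fixedp p j -> g j = a (p j) j)].

End TwoAction.

Definition has_card (T : eqType) (P : T -> Prop) (n : nat) : Prop :=
  exists s : seq T, [/\ uniq s, (forall x, x \in s <-> P x) & size s = n].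

Definition derangement {m : nat} (p : {perm 'I_m}) : bool :=
  [forall i, p i != i].

Definition maximal_game (R : realType) (m : nat)
    (U : 'I_m -> {ffun 'I_m -> bool} -> R) (a : 'I_m -> 'I_m -> R) : Prop :=
  forall p : {perm 'I_m}, ~~ derangement p ->
    exists n k : nat,
      [/\ has_card (EC a p) n,
          has_card (fun g => EC a p g /\ nash U g) k
        & (2 * k = n)%N].

Definition subfact (n : nat) : nat := #|[set p : {perm 'I_n} | derangement p]|.

Definition Vcount (m : nat) : nat :=
  (\sum_(l < m.+1) 'C(m, l) * 2 ^ l * subfact (m - l))%N.

(* Main.v *)
Require Import Defs.
From HB Require Import structures.
From mathcomp Require Import all_boot all_order all_algebra all_fingroup.
From mathcomp Require Import reals.
Set Implicit Arguments. Unset Strict Implicit. Unset Printing Implicit Defensive.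
Import Order.TTheory GRing.Theory Num.Theory.
Local Open Scope ring_scope.

Lemma has_card_uniq (T : eqType) (P : T -> Prop) n1 n2 :
  has_card P n1 -> has_card P n2 -> n1 = n2.
Proof.
move=> [s1 [u1 m1 <-]] [s2 [u2 m2 <-]].
apply: perm_size; apply: uniq_perm => // x.
by apply/idP/idP => H; [apply/m2/m1|apply/m1/m2].
Qed.

Lemma Lset_iff (R : realType) m (g : {ffun 'I_m -> R}) i :
  in01 g -> Lset g i <-> ~~ (0 < g i < 1).
Proof.
move=> /(_ i) /andP [g0 g1]; split.
  by case=> ->; rewrite ?ltxx ?andbF.
rewrite negb_and -!leNgt => /orP [H|H]; [left|right]; apply/eqP; rewrite eq_le H ?g0 ?g1 //=; exact: g1.
Qed.

Lemma EC_unique (R : realType) m U v (a : 'I_m -> 'I_m -> R) p1 p2 g :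
  product_game U v a -> EC a p1 g -> EC a p2 g -> p1 = p2.
Proof.
move=> [_ dist _] [_ L1 E1] [_ L2 E2]; apply/permP => j.
have F12 : fixedp p1 j = fixedp p2 j.
  by apply/idP/idP => H; [apply/L2/L1 | apply/L1/L2].
case F1 : (fixedp p1 j).
  by move: (F1); rewrite F12 /fixedp => /eqP ->; move: F1 => /eqP ->.
have F2 : ~~ fixedp p2 j by rewrite -F12 F1.
have e1 := E1 j (negbT F1); have e2 := E2 j F2.
apply/eqP; apply/negPn/negP => H.
by have := dist _ _ _ (negbT F1) F2 H; rewrite -e1 -e2 eqxx.
Qed.

Lemma nash_EC (R : realType) m U v (a : 'I_m -> 'I_m -> R) g :
  product_game U v a -> nash U g -> exists p, EC a p g.
Proof.
move=> [Ha dist Hl] [g01 Hn].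
pose int i := 0 < g i < 1.
have Hz i : int i -> exists2 j, j != i & g j == a i j.
  move=> Hi; have [H1 _ _] := Hn i; have := H1 Hi; rewrite Hl //.
  move/eqP; rewrite mulf_eq0 signr_eq0 /= => /prodf_eq0 [j ji].
  by rewrite subr_eq0 => /eqP E; exists j => //; rewrite E.
pose f i := if int i then odflt i [pick j | (j != i) && (g j == a i j)] else i.
have Hf i : int i -> (f i != i) && (g (f i) == a i (f i)).
  move=> Hi; rewrite /f Hi; case: pickP => [j //|H0].
  by have [j j1 j2] := Hz i Hi; have := H0 j; rewrite j1 j2.
have Hfn i : ~~ int i -> f i = i by rewrite /f => /negbTE ->.
have Hint i : int i -> int (f i).
  move=> Hi; have /andP [n e] := Hf i Hi; rewrite /int (eqP e).
  by apply: Ha; rewrite eq_sym.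
have finj : injective f.
  move=> x y; case Ix : (int x); case Iy : (int y).
  - move=> Exy; apply/eqP; apply/negPn/negP => nxy.
    have /andP [nx ex] := Hf x Ix; have /andP [ny ey] := Hf y Iy.
    rewrite -Exy in ny ey.
    have := dist x y (f x); rewrite eq_sym nx eq_sym ny nxy -(eqP ex) -(eqP ey).
    by rewrite eqxx => /(_ isT isT isT).
  - by move=> E; move: (Hint x Ix); rewrite E Hfn ?Iy.
  - by move=> E; move: (Hint y Iy); rewrite -E Hfn ?Ix.
  - by rewrite !Hfn ?Ix ?Iy.
pose p := perm finj.
have fixE i : fixedp (p^-1)%g i = ~~ int i.
  rewrite /fixedp; apply/eqP/idP => [E|H].
    have : p ((p^-1)%g i) = p i by rewrite E.
    rewrite permKV permE => E2; apply/negP => Ii.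
    by have := Hf i Ii; rewrite -E2 eqxx.
  have E : p i = i by rewrite permE Hfn.
  by rewrite -{1}E permK.
exists (p^-1)%g; split => // [i|j].
  by rewrite fixE; apply: Lset_iff.
rewrite fixE negbK => Ij.
set i := (p^-1)%g j.
have Ii : int i.
  apply/negPn/negP => Ni; have := Hfn i Ni.
  have -> : f i = j by rewrite /i -[f _]permE permKV.
  by move=> E; move: Ij; rewrite E (negbTE Ni).
have := Hf i Ii; rewrite -[f i]permE /i permKV => /andP [_ /eqP ->] //.
Qed.

Lemma der_EC (R : realType) m U v (a : 'I_m -> 'I_m -> R) (p : {perm 'I_m}) :
  product_game U v a -> derangement p ->
  has_card (fun g => EC a p g /\ nash U g) 1.
Proof.
move=> [Ha dist Hl] /forallP Hd.
pose g0 : {ffun 'I_m -> R} := [ffun j => a (p j) j].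
have g0r j : 0 < g0 j < 1 by rewrite ffunE; apply: Ha; apply: Hd.
have g01 : in01 g0 by move=> j; have /andP [h1 h2] := g0r j; rewrite !ltW.
have ECg0 : EC a p g0.
  split => // [i|j _]; last by rewrite ffunE.
  rewrite /fixedp (negbTE (Hd i)); split => // -[] E; have := g0r i; rewrite E.
    by rewrite ltxx.
  by rewrite ltxx andbF.
have Ng0 : nash U g0.
  split => // i; split.
  - move=> _; rewrite Hl //; set j := (p^-1)%g i.
    have ji : j != i.
      apply/negP => /eqP E; have := Hd i; rewrite -{1}E /j permKV.
      by rewrite eqxx.
    rewrite (bigD1 j) //= ffunE /j permKV subrr mul0r mulr0 //.
  - by move=> E; have := g0r i; rewrite E ltxx.
  - by move=> E; have := g0r i; rewrite E ltxx andbF.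
exists [:: g0]; split => // g; rewrite inE; split.
  by move/eqP ->.
move=> [[_ _ Eg] _]; apply/eqP/ffunP => j; rewrite ffunE Eg //.
by rewrite /fixedp Hd.
Qed.

Lemma EC_card (R : realType) m U v (a : 'I_m -> 'I_m -> R) (p : {perm 'I_m}) :
  product_game U v a -> has_card (EC a p) (2 ^ #|[set i | p i == i]|).
Proof.
move=> [Ha dist Hl].
set F := [set i | p i == i].
pose gB (B : {set 'I_m}) : {ffun 'I_m -> R} :=
  [ffun i => if p i == i then (if i \in B then 1 else 0) else a (p i) i].
exists [seq gB B | B <- enum (powerset F)]; split.
- rewrite map_inj_in_uniq ?enum_uniq // => B1 B2.
  rewrite !mem_enum !powersetE => /subsetP S1 /subsetP S2 E.
  apply/setP => i; have := congr1 (fun f : {ffun 'I_m -> R} => f i) E; rewrite /= !ffunE.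
  case: ifP => Hi.
    by case: (i \in B1); case: (i \in B2) => // /eqP; rewrite ?oner_eq0 // eq_sym oner_eq0.
  have N1 : i \notin B1 by apply/negP => /S1; rewrite inE Hi.
  have N2 : i \notin B2 by apply/negP => /S2; rewrite inE Hi.
  by rewrite (negbTE N1) (negbTE N2).
- move=> g; split.
  + case/mapP => B _ ->; split.
    * move=> i; rewrite ffunE; case: ifP => Hi.
        by case: (i \in B); rewrite ?lexx ?ler01.
      by have /andP [h1 h2] := Ha (p i) i (negbT Hi); rewrite !ltW.
    * move=> i; rewrite /Lset ffunE /fixedp; case: ifP => Hi.
        by split => // _; case: (i \in B); [right|left].
      have /andP [h1 h2] := Ha (p i) i (negbT Hi).
      by split => // -[] E; move: h1 h2; rewrite E ltxx.
    * by move=> j; rewrite /fixedp ffunE => /negbTE ->.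
  + move=> [g01 L E]; apply/mapP.
    exists [set i | (p i == i) && (g i == 1)].
      by rewrite mem_enum powersetE; apply/subsetP => i; rewrite !inE => /andP [].
    apply/ffunP => i; rewrite !ffunE inE.
    case: ifP => Hi /=; last by rewrite E // /fixedp Hi.
    have : Lset g i by apply/L; rewrite /fixedp Hi.
    by rewrite Hi /=; case=> ->; rewrite ?eqxx // eq_sym oner_eq0.
- by rewrite size_map -cardE card_powerset.
Qed.

Lemma per_p (R : realType) m U v (a : 'I_m -> 'I_m -> R) (p : {perm 'I_m}) :
  product_game U v a -> maximal_game U a ->
  exists s, [/\ uniq s, (forall x, x \in s <-> EC a p x /\ nash U x)
   & (2 * size s = if derangement p then 2 else 2 ^ #|[set i | p i == i]|)%N].
Proof.
move=> PG MG; case: ifP => Hd.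
  by have [s [u ms sz]] := der_EC PG Hd; exists s; split; rewrite ?sz.
have [n [k [Hn [s [u ms sz]] E]]] := MG p (negbT Hd).
exists s; split => //.
by rewrite sz E; apply: has_card_uniq Hn (EC_card p PG).
Qed.

Lemma assemble (R : realType) m U v (a : 'I_m -> 'I_m -> R) (ps : seq {perm 'I_m}) :
  product_game U v a -> maximal_game U a -> uniq ps ->
  exists s, [/\ uniq s,
    (forall x, x \in s <-> exists2 p, p \in ps & (EC a p x /\ nash U x))
   & (2 * size s = \sum_(p <- ps) (if derangement p then 2 else 2 ^ #|[set i | p i == i]|))%N].
Proof.
move=> PG MG; elim: ps => [_|p ps IH /= /andP [pn up]].
  by exists [::]; split; rewrite ?big_nil // => x; split => // -[].
have [s [us ms ss]] := IH up.
have [sp [usp msp ssp]] := per_p p PG MG.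
exists (sp ++ s); split.
- rewrite cat_uniq usp us andbT; apply/hasP => -[x xs /msp [Ex _]].
  have [q qps [Eq _]] := (ms x).1 xs.
  by move: pn; rewrite (EC_unique PG Ex Eq) qps.
- move=> x; rewrite mem_cat; split.
    case/orP => [/msp H|/ms [q qps H]]; first by exists p; rewrite ?inE ?eqxx.
    by exists q; rewrite // inE qps orbT.
  move=> [q]; rewrite inE => /orP [/eqP -> H|qps H].
    by apply/orP; left; apply/msp.
  by apply/orP; right; apply/ms; exists q.
- by rewrite size_cat mulnDr ssp ss big_cons.
Qed.

Local Close Scope ring_scope.
Definition Dn (T : finType) := #|[set p : {perm T} | [forall x, p x != x]]|.

Lemma Dn_le (T1 T2 : finType) (f : T1 -> T2) (g : T2 -> T1) :
  cancel f g -> cancel g f -> Dn T1 <= Dn T2.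
Proof.
move=> fK gK.
have injf := can_inj fK; have injg := can_inj gK.
have cinj (p : {perm T1}) : injective (fun y => f (p (g y))).
  by move=> y1 y2 /injf/perm_inj/injg.
pose c p := perm (cinj p).
have cI : injective c.
  move=> p1 p2 /permP H; apply/permP => x.
  by have := H (f x); rewrite !permE /= fK => /injf.
rewrite /Dn -(card_imset _ cI); apply: subset_leq_card.
apply/subsetP => _ /imsetP[p Hp ->]; rewrite inE.
apply/forallP => y; rewrite permE /=.
move: Hp; rewrite inE => /forallP /(_ (g y)); apply: contra => /eqP H.
by apply/eqP; rewrite -[in RHS]H fK.
Qed.

Lemma Dn_card (T : finType) : Dn T = subfact #|T|.
Proof.
apply/eqP; rewrite eqn_leq.
by rewrite (Dn_le (@enum_rankK T) (@enum_valK T)) (Dn_le (@enum_valK T) (@enum_rankK T)).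
Qed.

Definition fixs m (p : {perm 'I_m}) : {set 'I_m} := [set i | p i == i].

Lemma card_fixs m (S : {set 'I_m}) :
  #|[set p : {perm 'I_m} | fixs p == S]| = subfact (m - #|S|).
Proof.
pose T' := {x : 'I_m | x \in ~: S}.
have cT : #|{: T'}| = m - #|S|.
  rewrite card_sig; have := cardsC S; rewrite card_ord => E.
  have E2 : #|[pred x in ~: S]| = #|~: S| by apply: eq_card => x; rewrite !inE.
  by rewrite E2 -{1}(addKn #|S| #|~: S|) E.
rewrite -cT -Dn_card.
pose ext (q : {perm T'}) (x : 'I_m) :=
  if insub x is Some y then val (q y) else x.
have extI q : injective (ext q).
  move=> x1 x2; rewrite /ext.
  case: insubP => [y1 H1 <-|H1]; case: insubP => [y2 H2 <-|H2] //.
  - by move/val_inj/perm_inj ->.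
  - by move=> E; move: H2; rewrite -E (valP (q y1)).
  - by move=> E; move: H1; rewrite E (valP (q y2)).
pose e q := perm (extI q).
have eI : injective e.
  move=> q1 q2 /permP H; apply/permP => y; apply: val_inj.
  by have := H (val y); rewrite !permE /ext valK.
rewrite /Dn -(card_imset _ eI); apply: eq_card => p; rewrite inE.
apply/eqP/imsetP.
- move=> HS.
  have Hf i : (i \in S) = (p i == i) by rewrite -HS inE.
  have Hin (y : T') : p (val y) \in ~: S.
    rewrite inE Hf; apply/negP => /eqP /perm_inj E.
    by move: (valP y); rewrite inE Hf E eqxx.
  have qinj : injective (fun y => Sub (p (val y)) (Hin y) : T').
    by move=> y1 y2 /(congr1 val); rewrite !SubK => /perm_inj /val_inj.
  exists (perm qinj).
    rewrite inE; apply/forallP => y; rewrite permE; apply/negP => /eqP /(congr1 val).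
    by rewrite SubK => E; move: (valP y); rewrite inE Hf E eqxx.
  apply/permP => x; rewrite permE /ext; case: insubP => [y Hy <-|Hn].
    by rewrite permE SubK.
  by move: Hn; rewrite inE negbK Hf => /eqP.
- case=> q; rewrite inE => /forallP Hq ->; apply/setP => i.
  rewrite !inE permE /ext; case: insubP => [y Hy Ey|Hn].
    move: Hy; rewrite inE => /negbTE ->; rewrite -Ey; apply/negbTE.
    by apply: contra (Hq y) => /eqP /val_inj ->.
  by rewrite eqxx; move: Hn; rewrite inE negbK => ->.
Qed.

Lemma sum_fix m : \sum_(p : {perm 'I_m}) 2 ^ #|fixs p| = Vcount m.
Proof.
rewrite (partition_big (@fixs m) xpredT) //=.
have -> : \sum_(S : {set 'I_m}) \sum_(p | fixs p == S) 2 ^ #|fixs p|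
        = \sum_(S : {set 'I_m}) 2 ^ #|S| * subfact (m - #|S|).
  apply: eq_bigr => S _.
  rewrite (eq_bigr (fun _ => 2 ^ #|S|)); last by move=> p /eqP ->.
  rewrite sum_nat_const mulnC; congr (_ * _).
  by rewrite -card_fixs; apply: eq_card => p; rewrite inE.
rewrite /Vcount (partition_big (fun S : {set 'I_m} => (inord #|S| : 'I_m.+1)) xpredT) //=.
apply: eq_bigr => l _.
have Hb (S : {set 'I_m}) : #|S| <= m by rewrite -[X in _ <= X]card_ord max_card.
rewrite (eq_bigr (fun _ => 2 ^ l * subfact (m - l))); last first.
  by move=> S /eqP <-; rewrite inordK // ltnS.
rewrite (sum_nat_const [pred S : {set 'I_m} | inord #|S| == l]) mulnA; congr (_ * _ * _).
rewrite -[X in 'C(X, _)]card_ord -card_draws; apply: eq_card => S; rewrite !inE.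
apply/eqP/eqP => [<-|E]; first by rewrite inordK // ltnS.
by apply: val_inj; rewrite /= inordK // ltnS.
Qed.

Unset Implicit Arguments.

Theorem corollary4p5 (R : realType) (m : nat) (hm : (0 < m)%N)
    (U : 'I_m -> {ffun 'I_m -> bool} -> R)
    (v : 'I_m -> bool) (a : 'I_m -> 'I_m -> R) :
  product_game U v a ->
  maximal_game U a ->
  exists N : nat, has_card (nash U) N /\ (2 * N = Vcount m + subfact m)%N.
Proof.
move=> PG MG.
have [s [us ms ss]] := @assemble R m U v a (index_enum {perm 'I_m}) PG MG (index_enum_uniq _).
exists (size s); split.
  exists s; split => // x; split.
    by case/ms => p _ [].
  move=> Nx; have [p Ep] := nash_EC PG Nx; apply/ms; exists p => //.
  by rewrite mem_index_enum.
rewrite ss -sum_fix.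
have -> : subfact m = \sum_(p : {perm 'I_m}) (derangement p : nat).
  rewrite /subfact -sum1_card big_mkcond; apply: eq_bigr => p _.
  by rewrite inE; case: derangement.
rewrite -big_split /=; apply: eq_bigr => p _.
case: ifP => Hd; last by rewrite addn0.
have -> : #|fixs p| = 0%N.
  apply/eqP; rewrite cards_eq0; apply/eqP/setP => i; rewrite !inE.
  by move/forallP: Hd => /(_ i) /negbTE ->.
by [].
Qed.
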